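(* Let $G$ and $H$ be finite simple graphs, each with at least two vertices. Then the modular product $G\diamond H$ has no two distinct vertices $x,y$ with $N_{G\diamond H}(x)=N_{G\diamond H}(y)$.
   Context: The modular product $G\diamond H$ has vertex set $V(G)\times V(H)$; distinct vertices $(g,h)$ and $(g',h')$ are adjacent iff ($g=g'$ and $hh'\in E(H)$), or ($gg'\in E(G)$ and $h=h'$), or ($gg'\in E(G)$ and $hh'\in E(H)$), or ($g\neq g'$, $h\neq h'$, $gg'\notin E(G)$ and $hh'\notin E(H)$). $N_X(v)$ denotes the open neighborhood of $v$ in a graph $X$. *)

(* Defs.v *)
From mathcomp Require Import all_boot.
Set Implicit Arguments. Unset Strict Implicit. Unset Printing Implicit Defensive.

Definition simple_graph (V : finType) (e : rel V) : Prop :=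
  symmetric e /\ irreflexive e.

Definition modular_product (T U : finType) (eG : rel T) (eH : rel U) : rel (T * U) :=
  fun x y =>
    let: (g, h) := x in let: (g', h') := y in
    (x != y) &&
    [|| (g == g') && eH h h',
        eG g g' && (h == h'),
        eG g g' && eH h h'
      | [&& g != g', h != h', ~~ eG g g' & ~~ eH h h'] ].

Definition open_nbhd (V : finType) (e : rel V) (v : V) : {set V} :=
  [set w | e v w].

(* Main.v *)
Require Import Defs.
From mathcomp Require Import all_boot.

Lemma other (T : finType) (g : T) : 1 < #|T| -> exists g2, g2 != g.
Proof.
move/card_gt1P => [a [b [_ _ ab]]].
case: (eqVneq a g) => [ag|ag]; last by exists a.
by exists b; rewrite -ag eq_sym.
Qed.

Theorem mainTheorem1 (T U : finType) (eG : rel T) (eH : rel U) :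
  simple_graph eG -> simple_graph eH ->
  1 < #|T| -> 1 < #|U| ->
  forall x y : T * U, x != y ->
    open_nbhd (modular_product eG eH) x != open_nbhd (modular_product eG eH) y.
Proof.
move=> [sG iG] [sH iH] cT cU x y nxy.
suff [z Hz] : exists z, modular_product eG eH x z != modular_product eG eH y z.
  apply/negP => /eqP /setP /(_ z); rewrite !inE => E.
  by move: Hz; rewrite E eqxx.
case: x y nxy => g h [g' h'] nxy.
case Exy: (modular_product eG eH (g', h') (g, h)).
  by exists (g, h); rewrite Exy /modular_product eqxx.
move: Exy nxy; rewrite /modular_product xpair_eqE.
case: (eqVneq g g') => [<-|ng]; case: (eqVneq h h') => [<-|nh] //=.
- by rewrite eqxx.
- move=> Hh _.
  have [g2 n2] := @other _ g cT; exists (g2, h).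
  have n2' : (g == g2) = false by rewrite eq_sym; apply/negbTE.
  rewrite /= !xpair_eqE !eqxx n2' (eq_sym h') (negbTE nh) /= ?iH ?(sH h' h).
  by move: Hh; rewrite ?iG ?iH ?(sH h' h); case: (eH h h'); case: (eG g g2).
- move=> Hg _.
  have [h2 n2] := @other _ h cU; exists (g, h2).
  have n2' : (h == h2) = false by rewrite eq_sym; apply/negbTE.
  rewrite /= !xpair_eqE !eqxx n2' (eq_sym g') (negbTE ng) /= ?iG ?(sG g' g).
  by move: Hg; rewrite ?iG ?iH ?(sG g' g); case: (eG g g'); case: (eH h h2).
- move=> Hgh _.
  have ng' := negbTE ng; have nh' := negbTE nh.
  have ng'' : (g' == g) = false by rewrite eq_sym.
  have nh'' : (h' == h) = false by rewrite eq_sym.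
  case EG: (eG g g').
  + exists (g', h); rewrite /= !xpair_eqE !eqxx ?ng' ?nh' ?ng'' ?nh'' /= ?iH ?iG ?(sG g' g) ?(sH h' h) EG.
    by move: Hgh; rewrite ?(sG g' g) ?(sH h' h) EG; case: (eH h h').
  + exists (g, h'); rewrite /= !xpair_eqE !eqxx ?ng' ?nh' ?ng'' ?nh'' /= ?iH ?iG ?(sG g' g) ?(sH h' h) EG.
    by move: Hgh; rewrite ?(sG g' g) ?(sH h' h) EG; case: (eH h h').
Qed.
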